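(* Let $X$ be a first-countable Hausdorff topological space and $f:X\to X$ a closed mapping. Suppose there exists $x_0\in X$ such that for each open cover $\mathcal{U}$ of $X$ there are $n\in\mathbb{N}_0$ and $U\in\mathcal{U}$ with $\{f^n(x_0),f^{n+1}(x_0)\}\subseteq U$. Then $f$ has a fixed point.
   Context: A mapping is closed if it maps closed sets to closed sets (continuity is not assumed). $\mathbb{N}_0=\{0,1,2,\dots\}$; $f^n$ is the $n$-fold iterate of $f$, $f^0$ the identity. *)

(* Defs.v *)
From mathcomp Require Import all_boot all_order.
From mathcomp Require Import all_classical topology.
Local Open Scope classical_set_scope.

Definition first_countable (X : topologicalType) : Prop :=
  forall x : X, exists B : nat -> set X,
    (forall n, nbhs x (B n)) /\
    (forall V, nbhs x V -> exists n, B n `<=` V).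

Definition closed_map (X : topologicalType) (f : X -> X) : Prop :=
  forall A : set X, closed A -> closed (f @` A).

Definition open_cover (X : topologicalType) (U : set (set X)) : Prop :=
  (forall V, U V -> open V) /\ (forall x : X, exists2 V, U V & V x).
Arguments closed_map {X}.
Arguments open_cover {X}.

(* Main.v *)
Require Import Defs.
From mathcomp Require Import all_boot all_order.
From mathcomp Require Import all_classical topology.
From mathcomp Require Import zify.
Local Open Scope classical_set_scope.

Section Aux.
Variable X : topologicalType.

Lemma sep (hX : hausdorff_space X) (p q : X) : p <> q ->
  exists G H : set X, [/\ open G, open H, G p, H q & forall z, G z -> H z -> False].
Proof.
move=> pq; move: hX; rewrite open_hausdorff => hX.
have /hX [[A B] /= [pA qB] [oA oB /eqP AB]] : p != q by apply/eqP.
exists A, B; split => //; try by rewrite -in_setE.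
by move=> z Az Bz; have : (A `&` B) z by []; rewrite AB.
Qed.
Arguments sep hX {p q}.

Lemma avoid (hX : hausdorff_space X) (p : X) (q : nat -> X) (m : nat) :
  exists W : set X, [/\ open W, W p & forall i, (i < m)%N -> W (q i) -> q i = p].
Proof.
elim: m => [|m [W [oW Wp HW]]].
  by exists setT; split => //; exact: openT.
case: (pselect (q m = p)) => qm.
  exists W; split => // i; rewrite ltnS leq_eqVlt => /orP [/eqP -> //|]; exact: HW.
have [G [H [oG oH Gp Hq GH]]] := sep hX (nesym qm).
exists (W `&` G); split => //; first exact: openI.
move=> i; rewrite ltnS leq_eqVlt => /orP [/eqP ->|/HW Hi [Wi _]]; last exact: Hi.
by move=> [_ Gq]; case: (GH _ Gq Hq).
Qed.

Lemma periodic_fix (hX : hausdorff_space X) (f : X -> X) (x0 y : X) (a b : nat) :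
  (a < b)%N -> iter a f x0 = iter b f x0 ->
  (forall V, nbhs y V -> exists n, V (iter n f x0) /\ V (iter n.+1 f x0)) ->
  f y = y.
Proof.
move=> ab Hab hacc.
have fin : forall n, exists i, (i < b.+1)%N /\ iter n f x0 = iter i f x0.
  elim/ltn_ind => n IH.
  case: (leqP n b) => nb; first by exists n.
  have e : iter n f x0 = iter (n - b + a) f x0.
    by rewrite -{1}(subnK (ltnW nb)) iterD -Hab -iterD.
  have [|i [ib ei]] := IH (n - b + a); first by lia.
  by exists i; rewrite e.
have [W [oW Wy HW]] := avoid hX y (fun i => iter i f x0) b.+1.
have [n [Wn Wn1]] := hacc W (open_nbhs_nbhs (conj oW Wy)).
have [i [ib ei]] := fin n; have [j [jb ej]] := fin n.+1.
rewrite ei in Wn; rewrite ej in Wn1.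
have e1 := HW _ ib Wn; have e2 := HW _ jb Wn1.
by rewrite -{1}e1 -ei -iterS ej e2.
Qed.

Fixpoint decr (B : nat -> set X) k := match k with 0 => B 0 | k'.+1 => decr B k' `&` B k end.

Lemma decr_nbhs B (y : X) : (forall n, nbhs y (B n)) -> forall k, nbhs y (decr B k).
Proof. move=> hB; elim => [|k IH] //=; exact: filterI. Qed.

Lemma decr_sub B k : decr B k `<=` B k.
Proof. by case: k => //= k z []. Qed.

Lemma decr_mono B k l : (k <= l)%N -> decr B l `<=` decr B k.
Proof.
move=> kl; rewrite -(subnKC kl); elim: (l - k) => [|d IH]; first by rewrite addn0.
by rewrite addnS => z [/IH].
Qed.

Arguments decr_mono {B k l}.
Arguments decr_sub {B k}.

Lemma closure_seq (hX : hausdorff_space X) (y : X) (z : nat -> X) (P : set nat) :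
  (forall V, nbhs y V -> exists K, forall k, (K <= k)%N -> V (z k)) ->
  closure (z @` P) `<=` z @` P `|` [set y].
Proof.
move=> conv p cp.
case: (pselect ((z @` P `|` [set y]) p)) => // np; exfalso.
have py : p <> y by move=> e; apply: np; right.
have [G [H [oG oH Gp Hy GH]]] := sep hX py.
have [K HK] := conv H (open_nbhs_nbhs (conj oH Hy)).
have [W [oW Wp HW]] := avoid hX p z K.
have [q [[k Pk <-] [Gz Wz]]] := cp (G `&` W) (open_nbhs_nbhs (conj (openI oG oW) (conj Gp Wp))).
case: (ltnP k K) => kK.
  by apply: np; left; exists k => //; apply: HW.
exact: (GH _ Gz (HK _ kK)).
Qed.

Lemma fix_of_acc (f : X -> X) (x0 y : X) :
  first_countable X -> hausdorff_space X -> closed_map f ->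
  (forall V, nbhs y V -> exists n, V (iter n f x0) /\ V (iter n.+1 f x0)) ->
  f y = y.
Proof.
move=> hfc hX hcl hacc.
case: (pselect (f y = y)) => // fy; exfalso.
have [B [hB1 hB2]] := hfc y.
have [nk Hnk] := choice (fun k => hacc _ (@decr_nbhs B y hB1 k)).
pose z k := iter (nk k) f x0.
have convD : forall V, nbhs y V -> exists K, forall k, (K <= k)%N -> forall w, decr B k w -> V w.
  move=> V /hB2 [j Bj]; exists j => k jk w /(decr_mono jk) /decr_sub; exact: Bj.
have convz : forall V, nbhs y V -> exists K, forall k, (K <= k)%N -> V (z k).
  move=> V /convD [K HK]; exists K => k Kk; apply: (HK _ Kk); exact: (Hnk k).1.
pose S := z @` [set k | f (z k) <> y].
have cS := @closure_seq hX y z [set k | f (z k) <> y] convz.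
have Ny : nbhs y (~` (f @` closure S)).
  apply: open_nbhs_nbhs; split; first by rewrite openC; apply: hcl; exact: closed_closure.
  move=> [c /cS [[k fk <-]|->] fc] //.
have [K HK] := convD _ Ny.
have hK : forall k, (K <= k)%N -> iter (nk k).+1 f x0 = y.
  move=> k Kk; case: (pselect (iter (nk k).+1 f x0 = y)) => // ne; exfalso.
  have HH := HK k Kk _ (Hnk k).2; apply: HH; exists (z k) => //.
  by apply: subset_closure; exists k.
case: (pselect (exists k, (K <= k)%N /\ nk k <> nk K)) => [[k [Kk ne]]|no].
  have e : iter (nk k).+1 f x0 = iter (nk K).+1 f x0 by rewrite hK // hK.
  case: (ltngtP (nk k) (nk K)) => [lt|gt|eq]; last by [].
    by apply: fy; apply: (@periodic_fix hX f x0 y (nk k).+1 (nk K).+1 lt e hacc).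
  by apply: fy; apply: (@periodic_fix hX f x0 y (nk K).+1 (nk k).+1 gt (esym e) hacc).
have allK : forall k, (K <= k)%N -> nk k = nk K.
  move=> k Kk; apply: contra_notP no => ne; by exists k.
have zK : z K = y.
  case: (pselect (z K = y)) => // ne; exfalso.
  have [G [H [oG oH Gz Hy GH]]] := sep hX ne.
  have [j Bj] := hB2 _ (open_nbhs_nbhs (conj oH Hy)).
  have := (Hnk (maxn j K)).1; rewrite allK ?leq_maxr // => /(decr_mono (leq_maxl j K)) /decr_sub /Bj Hz.
  exact: (GH _ Gz Hz).
by apply: fy; rewrite -{1}zK /z -iterS hK.
Qed.

End Aux.

Theorem theorem6 (X : topologicalType) (f : X -> X) :
  first_countable X -> hausdorff_space X -> closed_map f ->
  (exists x0 : X, forall U : set (set X), open_cover U ->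
     exists (n : nat) (V : set X), U V /\ V (iter n f x0) /\ V (iter n.+1 f x0)) ->
  exists x : X, f x = x.
Proof.
move=> hfc hX hcl [x0 hx0].
case: (pselect (exists x, f x = x)) => // nofix; exfalso.
pose U := [set V : set X | open V /\ forall n, ~ (V (iter n f x0) /\ V (iter n.+1 f x0))].
have cov : open_cover U.
  split; first by move=> V [].
  move=> y; case: (pselect (exists2 V, U V & V y)) => // nV; exfalso.
  apply: nofix; exists y; apply: (@fix_of_acc X f x0 y hfc hX hcl).
  move=> V; rewrite nbhsE => -[O [oO Oy] OV].
  case: (pselect (exists n, O (iter n f x0) /\ O (iter n.+1 f x0))) => [[n [h1 h2]]|nn].
    by exists n; split; apply: OV.
  exfalso; apply: nV; exists O => //; split => // n h; apply: nn; by exists n.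
have [n [V [[_ HV] [h1 h2]]]] := hx0 U cov.
exact: (HV n).
Qed.
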